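(* Let $l\ge3$ and consider the edge reinforced random walk $(I_n)$ on $\mathcal G_l$ with weight function $W:\mathbb N\to(0,\infty)$ and arbitrary initial edge weights $X_0^e\in\mathbb N$. For each $i\in\{0,\ldots,l-1\}$ the process $\kappa_n^i:=\sum_{k=0}^{n-1}\frac{1_{\{I_k=i,\,I_{k+1}=i+1\}}}{W(X_k^{e_i})}-\sum_{k=0}^{n-1}\frac{1_{\{I_k=i,\,I_{k+1}=i-1\}}}{W(X_k^{e_{i-1}})}$, $n\ge0$, is an $(\mathcal F_n)$-martingale. Moreover, if $l$ is even, then $\kappa_n:=\sum_{i=0}^{l-1}(-1)^i\kappa_n^i+\sum_{i=0}^{l-1}(-1)^iW^*(X_0^{e_i})$ satisfies $\kappa_n=\sum_{i=0}^{l-1}(-1)^iW^*(X_n^{e_i})$ for all $n$, it is a martingale, and if in addition $\sum_{k\in\mathbb N}\frac1{W(k)}<\infty$ then $\kappa_n$ converges almost surely to a finite limit $\kappa_\infty$, with $\kappa_\infty=0$ almost surely on the event that all edges of $\mathcal G_l$ are traversed infinitely often.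
   Context: $\mathbb N=\{0,1,2,\ldots\}$. For $l\ge 3$, the cycle $\mathcal G_l$ has vertices $\{0,\ldots,l-1\}$ and edges $e_i=\{i,i+1\}$, addition modulo $l$. ERRW on $\mathcal G_l$: given $W:\mathbb N\to(0,\infty)$, initial edge weights $X_0^e\in\mathbb N$ and $I_0=v_0$, with natural filtration $(\mathcal F_n)$, $\mathbb P(I_{n+1}=v'\mid\mathcal F_n)1_{\{I_n=v\}}=\frac{W(X_n^{\{v,v'\}})}{\sum_{w\sim v}W(X_n^{\{v,w\}})}1_{\{I_n=v\sim v'\}}$, where $X_n^e=X_0^e+\sum_{k=0}^{n-1}1_{\{\{I_k,I_{k+1}\}=e\}}$. Define $W^*(n):=\sum_{k=0}^{n-1}\frac1{W(k)}$ for $n\in\mathbb N$, with $W^*(0)=0$. *)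

(* Defs.v *)
From Stdlib Require Import Reals Arith Bool.
Open Scope R_scope.

(* Cycle G_l: vertices 0..l-1, edge e_i = {i, i+1 mod l}. *)
Definition succv (l u : nat) : nat := ((u + 1) mod l)%nat.
Definition predv (l u : nat) : nat := ((u + l - 1) mod l)%nat.

(* index of the edge crossed by the step u -> v (meaningful for nearest-neighbour steps) *)
Definition edge_of (l u v : nat) : nat := if Nat.eqb v (succv l u) then u else v.

Fixpoint sumR (f : nat -> R) (n : nat) : R :=
  match n with O => 0 | S m => sumR f m + f m end.
Fixpoint prodR (f : nat -> R) (n : nat) : R :=
  match n with O => 1 | S m => prodR f m * f m end.

Definition Wstar (W : nat -> R) (n : nat) : R := sumR (fun k => / W k) n.

(* paths are infinite vertex sequences p : nat -> nat, p k = I_k *)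
Fixpoint cross_count (l : nat) (p : nat -> nat) (n i : nat) : nat :=
  match n with
  | O => O
  | S m => (cross_count l p m i + (if Nat.eqb (edge_of l (p m) (p (S m))) i then 1 else 0))%nat
  end.

Definition Xn (l : nat) (X0 : nat -> nat) (p : nat -> nat) (n i : nat) : nat :=
  (X0 i + cross_count l p n i)%nat.

(* P(I_{n+1} = v | F_n) on the history p 0..n *)
Definition trans (l : nat) (W : nat -> R) (X0 : nat -> nat) (p : nat -> nat) (n v : nat) : R :=
  let u := p n in
  let a := W (Xn l X0 p n u) in
  let b := W (Xn l X0 p n (predv l u)) in
  if Nat.eqb v (succv l u) then a / (a + b)
  else if Nat.eqb v (predv l u) then b / (a + b) else 0.

(* P(I_0 = p 0, ..., I_n = p n) *)
Definition cyl_prob (l : nat) (W : nat -> R) (X0 : nat -> nat) (v0 : nat)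
  (p : nat -> nat) (n : nat) : R :=
  (if Nat.eqb (p 0%nat) v0 then 1 else 0) * prodR (fun k => trans l W X0 p k (p (S k))) n.

Definition ext (p : nat -> nat) (n v : nat) : nat -> nat :=
  fun k => if Nat.leb k n then p k else v.

(* (F_n)-martingale on path space: adapted, and E[M_{n+1} | F_n] = M_n on every
   history of positive probability (integrability is automatic: M_n takes
   finitely many values on positive-probability histories). *)
Definition martingale (l : nat) (W : nat -> R) (X0 : nat -> nat) (v0 : nat)
  (M : (nat -> nat) -> nat -> R) : Prop :=
  (forall p q n, (forall k, (k <= n)%nat -> p k = q k) -> M p n = M q n) /\
  (forall p n, 0 < cyl_prob l W X0 v0 p n ->
     sumR (fun v => trans l W X0 p n v * M (ext p n v) (S n)) l = M p n).

Definition kappa_i (l : nat) (W : nat -> R) (X0 : nat -> nat) (i : nat)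
  (p : nat -> nat) (n : nat) : R :=
  sumR (fun k =>
    (if Nat.eqb (p k) i && Nat.eqb (p (S k)) (succv l i)
     then / W (Xn l X0 p k i) else 0)
  - (if Nat.eqb (p k) i && Nat.eqb (p (S k)) (predv l i)
     then / W (Xn l X0 p k (predv l i)) else 0)) n.

Definition kappa (l : nat) (W : nat -> R) (X0 : nat -> nat)
  (p : nat -> nat) (n : nat) : R :=
  sumR (fun i => (-1) ^ i * kappa_i l W X0 i p n) l
  + sumR (fun i => (-1) ^ i * Wstar W (X0 i)) l.

(* Null sets for the law of the ERRW on path space: sets of outer measure 0,
   i.e. coverable by countably many cylinders of arbitrarily small total mass. *)
Definition null_set (l : nat) (W : nat -> R) (X0 : nat -> nat) (v0 : nat)
  (A : (nat -> nat) -> Prop) : Prop :=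
  forall eps, 0 < eps ->
    exists c : nat -> (nat -> nat) * nat,
      (forall p, A p -> exists j, forall k, (k <= snd (c j))%nat -> p k = fst (c j) k) /\
      (forall N, sumR (fun j => cyl_prob l W X0 v0 (fst (c j)) (snd (c j))) N <= eps).

Definition almost_surely (l : nat) (W : nat -> R) (X0 : nat -> nat) (v0 : nat)
  (P : (nat -> nat) -> Prop) : Prop :=
  null_set l W X0 v0 (fun p => ~ P p).

Definition all_edges_io (l : nat) (p : nat -> nat) : Prop :=
  forall i, (i < l)%nat -> forall N, exists k, (N <= k)%nat /\ edge_of l (p k) (p (S k)) = i.

(* Main.v *)
Require Import Defs.
From Stdlib Require Import Reals Arith Bool Lia Lra Cantor Classical.
Open Scope R_scope.

Lemma succv_lt l u : (3 <= l)%nat -> (succv l u < l)%nat.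
Proof. intros. unfold succv. apply Nat.mod_upper_bound. lia. Qed.
Lemma predv_lt l u : (3 <= l)%nat -> (predv l u < l)%nat.
Proof. intros. unfold predv. apply Nat.mod_upper_bound. lia. Qed.

Lemma succv_eq l u : (u < l)%nat -> succv l u = if Nat.eqb (u+1) l then 0%nat else (u+1)%nat.
Proof.
  intros H. unfold succv. destruct (Nat.eqb_spec (u+1) l) as [E|E].
  - rewrite E. apply Nat.Div0.mod_same.
  - apply Nat.mod_small. lia.
Qed.

Lemma predv_eq l u : (3 <= l)%nat -> (u < l)%nat ->
  predv l u = if Nat.eqb u 0 then (l-1)%nat else (u-1)%nat.
Proof.
  intros Hl H. unfold predv. destruct (Nat.eqb_spec u 0) as [E|E].
  - subst. apply Nat.mod_small. lia.
  - replace (u + l - 1)%nat with ((u-1) + 1*l)%nat by lia.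
    rewrite Nat.Div0.mod_add. apply Nat.mod_small. lia.
Qed.

Lemma succ_neq_pred l u : (3 <= l)%nat -> (u < l)%nat -> succv l u <> predv l u.
Proof.
  intros Hl H. rewrite succv_eq, predv_eq by lia.
  destruct (Nat.eqb_spec (u+1) l); destruct (Nat.eqb_spec u 0); lia.
Qed.

Lemma edge_succ l u : edge_of l u (succv l u) = u.
Proof. unfold edge_of. now rewrite Nat.eqb_refl. Qed.

Lemma edge_pred l u : (3 <= l)%nat -> (u < l)%nat -> edge_of l u (predv l u) = predv l u.
Proof.
  intros. unfold edge_of. destruct (Nat.eqb_spec (predv l u) (succv l u)); auto.
  exfalso. apply (succ_neq_pred l u); auto.
Qed.

Lemma sign_pred l u : Nat.Even l -> (3 <= l)%nat -> (u < l)%nat ->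
  (-1) ^ (predv l u) = - ((-1) ^ u).
Proof.
  intros [m Hm] Hl H. rewrite predv_eq by lia.
  destruct (Nat.eqb_spec u 0) as [E|E].
  - subst u. simpl.
    assert (Hp : (-1) ^ l = (-1) ^ (l-1) * (-1) ^ 1).
    { rewrite <- pow_add. f_equal. lia. }
    assert (H1 : (-1) ^ l = 1).
    { rewrite Hm, pow_mult. replace ((-1)^2) with 1 by ring. apply pow1. }
    simpl in Hp. lra.
  - assert (Hp : (-1) ^ u = (-1) ^ (u-1) * (-1) ^ 1).
    { rewrite <- pow_add. f_equal. lia. }
    simpl in Hp. lra.
Qed.

Lemma sumR_ext f g n : (forall k, (k < n)%nat -> f k = g k) -> sumR f n = sumR g n.
Proof.
  induction n; intros H; simpl; auto.
  rewrite IHn by (intros; apply H; lia). rewrite H by lia. auto.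
Qed.

Lemma sumR_plus f g n : sumR (fun k => f k + g k) n = sumR f n + sumR g n.
Proof. induction n; simpl; [ring|rewrite IHn; ring]. Qed.

Lemma sumR_minus f g n : sumR (fun k => f k - g k) n = sumR f n - sumR g n.
Proof. induction n; simpl; [ring|rewrite IHn; ring]. Qed.

Lemma sumR_scal c f n : sumR (fun k => c * f k) n = c * sumR f n.
Proof. induction n; simpl; [ring|rewrite IHn; ring]. Qed.

Lemma sumR_zero f n : (forall k, (k < n)%nat -> f k = 0) -> sumR f n = 0.
Proof.
  induction n; intros H; simpl; auto. rewrite IHn by (intros; apply H; lia).
  rewrite H by lia. ring.
Qed.

Lemma sumR_delta f n s : (s < n)%nat -> (forall k, (k < n)%nat -> k <> s -> f k = 0) ->
  sumR f n = f s.
Proof.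
  induction n; intros Hs H; [lia|]. simpl.
  destruct (Nat.eq_dec s n) as [E|E].
  - subst. rewrite sumR_zero; [ring|]. intros; apply H; lia.
  - rewrite IHn by (try lia; intros; apply H; lia). rewrite (H n) by lia. ring.
Qed.

Lemma sumR_two f n s t x y : (s < n)%nat -> (t < n)%nat -> s <> t ->
  (forall k, (k < n)%nat -> f k = (if Nat.eqb k s then x else 0) + (if Nat.eqb k t then y else 0)) ->
  sumR f n = x + y.
Proof.
  intros Hs Ht Hst H. rewrite (sumR_ext f _ n H), sumR_plus.
  rewrite (sumR_delta _ n s), (sumR_delta _ n t); auto.
  - rewrite !Nat.eqb_refl. auto.
  - intros k _ Hk. apply Nat.eqb_neq in Hk. now rewrite Hk.
  - intros k _ Hk. apply Nat.eqb_neq in Hk. now rewrite Hk.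
Qed.

Lemma cross_agree l p q n i : (forall k, (k <= n)%nat -> p k = q k) ->
  cross_count l p n i = cross_count l q n i.
Proof.
  induction n; intros H; simpl; auto.
  rewrite IHn by (intros; apply H; lia). rewrite (H n), (H (S n)) by lia. auto.
Qed.

Lemma Xn_agree l X0 p q n i : (forall k, (k <= n)%nat -> p k = q k) ->
  Xn l X0 p n i = Xn l X0 q n i.
Proof. intros. unfold Xn. now rewrite (cross_agree l p q n i). Qed.

Lemma Xn_S l X0 p n i : Xn l X0 p (S n) i =
  (Xn l X0 p n i + (if Nat.eqb (edge_of l (p n) (p (S n))) i then 1 else 0))%nat.
Proof. unfold Xn. simpl. lia. Qed.

Lemma Xn_mono l X0 p n m i : (n <= m)%nat -> (Xn l X0 p n i <= Xn l X0 p m i)%nat.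
Proof. induction 1; auto. rewrite Xn_S. lia. Qed.

Lemma kappa_i_agree l W X0 i p q n : (forall k, (k <= n)%nat -> p k = q k) ->
  kappa_i l W X0 i p n = kappa_i l W X0 i q n.
Proof.
  intros H. unfold kappa_i. apply sumR_ext. intros k Hk.
  rewrite (H k), (H (S k)) by lia.
  rewrite (Xn_agree l X0 p q k i), (Xn_agree l X0 p q k (predv l i)) by (intros; apply H; lia).
  auto.
Qed.

Lemma kappa_agree l W X0 p q n : (forall k, (k <= n)%nat -> p k = q k) ->
  kappa l W X0 p n = kappa l W X0 q n.
Proof.
  intros H. unfold kappa. f_equal. apply sumR_ext. intros i _.
  now rewrite (kappa_i_agree l W X0 i p q n).
Qed.

Lemma trans_agree l W X0 p q n v : (forall k, (k <= n)%nat -> p k = q k) ->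
  trans l W X0 p n v = trans l W X0 q n v.
Proof.
  intros H. unfold trans. rewrite (H n) by lia.
  rewrite (Xn_agree l X0 p q n (q n)), (Xn_agree l X0 p q n (predv l (q n))) by auto.
  auto.
Qed.

Lemma cyl_agree l W X0 v0 p q n : (forall k, (k <= n)%nat -> p k = q k) ->
  cyl_prob l W X0 v0 p n = cyl_prob l W X0 v0 q n.
Proof.
  intros H. unfold cyl_prob. rewrite (H 0%nat) by lia. f_equal.
  induction n; simpl; auto.
  rewrite IHn by (intros; apply H; lia).
  rewrite (H (S n)) by lia. rewrite (trans_agree l W X0 p q n) by (intros; apply H; lia).
  auto.
Qed.

Lemma ext_le p n v k : (k <= n)%nat -> ext p n v k = p k.
Proof. intros. unfold ext. apply Nat.leb_le in H. now rewrite H. Qed.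
Lemma ext_S p n v : ext p n v (S n) = v.
Proof. unfold ext. replace (Nat.leb (S n) n) with false; auto. symmetry. apply Nat.leb_gt. lia. Qed.

Lemma cyl_S l W X0 v0 p n : cyl_prob l W X0 v0 p (S n) =
  cyl_prob l W X0 v0 p n * trans l W X0 p n (p (S n)).
Proof. unfold cyl_prob. simpl. ring. Qed.

Lemma trans_nonneg l W X0 p n v : (forall k, 0 < W k) -> 0 <= trans l W X0 p n v.
Proof.
  intros hW. unfold trans.
  pose proof (hW (Xn l X0 p n (p n))). pose proof (hW (Xn l X0 p n (predv l (p n)))).
  destruct (Nat.eqb v _); [|destruct (Nat.eqb v _)]; try lra;
  apply Rlt_le, Rdiv_lt_0_compat; lra.
Qed.

Lemma cyl_nonneg l W X0 v0 p n : (forall k, 0 < W k) -> 0 <= cyl_prob l W X0 v0 p n.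
Proof.
  intros hW. induction n.
  - unfold cyl_prob. simpl. destruct (Nat.eqb _ _); lra.
  - rewrite cyl_S. apply Rmult_le_pos; auto. apply trans_nonneg; auto.
Qed.

Lemma trans_pos_step l W X0 p n v : 0 < trans l W X0 p n v ->
  v = succv l (p n) \/ v = predv l (p n).
Proof.
  unfold trans. destruct (Nat.eqb_spec v (succv l (p n))); auto.
  destruct (Nat.eqb_spec v (predv l (p n))); auto. lra.
Qed.

Lemma cyl_valid l W X0 v0 p n : (forall k, 0 < W k) -> 0 < cyl_prob l W X0 v0 p n ->
  p 0%nat = v0 /\ forall k, (k < n)%nat -> p (S k) = succv l (p k) \/ p (S k) = predv l (p k).
Proof.
  intros hW. induction n; intros H.
  - split; [|intros; lia]. unfold cyl_prob in H. simpl in H.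
    destruct (Nat.eqb_spec (p 0%nat) v0); auto. lra.
  - rewrite cyl_S in H.
    pose proof (cyl_nonneg l W X0 v0 p n hW). pose proof (trans_nonneg l W X0 p n (p (S n)) hW).
    assert (C1 : 0 < cyl_prob l W X0 v0 p n).
    { destruct H0; auto. rewrite <- H0 in H. lra. }
    assert (C2 : 0 < trans l W X0 p n (p (S n))).
    { destruct H1 as [H3|H3]; auto. rewrite <- H3 in H. lra. }
    destruct (IHn C1) as [A B]. split; auto. intros k Hk.
    destruct (Nat.eq_dec k n). subst. now apply (trans_pos_step l W X0). apply B. lia.
Qed.

Lemma cyl_lt l W X0 v0 p n : (3 <= l)%nat -> (v0 < l)%nat -> (forall k, 0 < W k) ->
  0 < cyl_prob l W X0 v0 p n -> forall k, (k <= n)%nat -> (p k < l)%nat.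
Proof.
  intros Hl Hv hW H. destruct (cyl_valid l W X0 v0 p n hW H) as [A B].
  induction k; intros Hk. lia.
  destruct (B k) as [E|E]; try lia; rewrite E; auto using succv_lt, predv_lt.
Qed.

Lemma trans_sum l W X0 p n G : (3 <= l)%nat -> (p n < l)%nat ->
  sumR (fun v => trans l W X0 p n v * G v) l =
  W (Xn l X0 p n (p n)) / (W (Xn l X0 p n (p n)) + W (Xn l X0 p n (predv l (p n)))) * G (succv l (p n))
  + W (Xn l X0 p n (predv l (p n))) / (W (Xn l X0 p n (p n)) + W (Xn l X0 p n (predv l (p n)))) * G (predv l (p n)).
Proof.
  intros Hl Hu. apply (sumR_two _ l (succv l (p n)) (predv l (p n))); auto using succv_lt, predv_lt, succ_neq_pred.
  intros v _. unfold trans.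
  destruct (Nat.eqb_spec v (succv l (p n))); destruct (Nat.eqb_spec v (predv l (p n))); subst; try ring.
  exfalso. eapply succ_neq_pred; eauto.
Qed.

Definition kterm l W X0 i (q : nat -> nat) k :=
    (if Nat.eqb (q k) i && Nat.eqb (q (S k)) (succv l i)
     then / W (Xn l X0 q k i) else 0)
  - (if Nat.eqb (q k) i && Nat.eqb (q (S k)) (predv l i)
     then / W (Xn l X0 q k (predv l i)) else 0).

Lemma kappa_i_S l W X0 i q n :
  kappa_i l W X0 i q (S n) = kappa_i l W X0 i q n + kterm l W X0 i q n.
Proof. reflexivity. Qed.

Lemma kappa_i_ext l W X0 i p n v :
  kappa_i l W X0 i (ext p n v) (S n) = kappa_i l W X0 i p n +
   ((if Nat.eqb (p n) i && Nat.eqb v (succv l i) then / W (Xn l X0 p n i) else 0)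
  - (if Nat.eqb (p n) i && Nat.eqb v (predv l i) then / W (Xn l X0 p n (predv l i)) else 0)).
Proof.
  rewrite kappa_i_S. rewrite (kappa_i_agree l W X0 i (ext p n v) p n) by (intros; apply ext_le; lia).
  unfold kterm. rewrite ext_S, ext_le by lia.
  rewrite !(Xn_agree l X0 (ext p n v) p n) by (intros; apply ext_le; lia). auto.
Qed.

Lemma mart_ki l W X0 v0 i : (3 <= l)%nat -> (forall k, 0 < W k) -> (v0 < l)%nat ->
  martingale l W X0 v0 (kappa_i l W X0 i).
Proof.
  intros Hl hW Hv. split.
  - intros p q n H. now apply kappa_i_agree.
  - intros p n H. assert (Hu : (p n < l)%nat) by (eapply cyl_lt; eauto).
    rewrite trans_sum by auto. rewrite !kappa_i_ext.
    set (K := kappa_i l W X0 i p n).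
    set (a := W (Xn l X0 p n (p n))). set (b := W (Xn l X0 p n (predv l (p n)))).
    assert (Ha : 0 < a) by apply hW. assert (Hb : 0 < b) by apply hW.
    destruct (Nat.eqb_spec (p n) i) as [E|E].
    + simpl. rewrite <- E. rewrite Nat.eqb_refl.
      replace (Nat.eqb (predv l (p n)) (succv l (p n))) with false.
      replace (Nat.eqb (succv l (p n)) (predv l (p n))) with false.
      rewrite Nat.eqb_refl. fold a b. field. split; lra.
      symmetry. apply Nat.eqb_neq. apply succ_neq_pred; auto.
      symmetry. apply Nat.eqb_neq. intro. eapply succ_neq_pred; eauto.
    + simpl. field. lra.
Qed.

Lemma kappa_mart l W X0 v0 : (3 <= l)%nat -> (forall k, 0 < W k) -> (v0 < l)%nat ->
  martingale l W X0 v0 (kappa l W X0).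
Proof.
  intros Hl hW Hv. split.
  - intros p q n H. now apply kappa_agree.
  - intros p n H. assert (Hu : (p n < l)%nat) by (eapply cyl_lt; eauto).
    rewrite trans_sum by auto.
    set (a := W (Xn l X0 p n (p n))). set (b := W (Xn l X0 p n (predv l (p n)))).
    assert (Ha : 0 < a) by apply hW. assert (Hb : 0 < b) by apply hW.
    set (s := succv l (p n)). set (t := predv l (p n)).
    assert (Hi : forall i, a / (a + b) * kappa_i l W X0 i (ext p n s) (S n)
                         + b / (a + b) * kappa_i l W X0 i (ext p n t) (S n) = kappa_i l W X0 i p n).
    { intros i. destruct (mart_ki l W X0 v0 i Hl hW Hv) as [_ M].
      rewrite <- (M p n H). rewrite trans_sum by auto. reflexivity. }
    unfold kappa.
    rewrite (sumR_ext (fun i => (-1) ^ i * kappa_i l W X0 i p n)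
      (fun i => a / (a + b) * ((-1) ^ i * kappa_i l W X0 i (ext p n s) (S n))
              + b / (a + b) * ((-1) ^ i * kappa_i l W X0 i (ext p n t) (S n)))).
    2:{ intros i _. rewrite <- Hi. ring. }
    rewrite sumR_plus, !sumR_scal. field. lra.
Qed.

Lemma cyl_prev l W X0 v0 p n : (forall k, 0 < W k) ->
  0 < cyl_prob l W X0 v0 p (S n) -> 0 < cyl_prob l W X0 v0 p n.
Proof.
  intros hW H. rewrite cyl_S in H.
  pose proof (cyl_nonneg l W X0 v0 p n hW). pose proof (trans_nonneg l W X0 p n (p (S n)) hW).
  destruct H0; auto. rewrite <- H0 in H. lra.
Qed.

Lemma Wstar_add W m (b : bool) :
  Wstar W (m + (if b then 1 else 0))%nat = Wstar W m + (if b then / W m else 0).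
Proof.
  destruct b.
  - replace (m + 1)%nat with (S m) by lia. reflexivity.
  - rewrite Nat.add_0_r. ring.
Qed.

Lemma kappa_formula l W X0 v0 : (3 <= l)%nat -> (forall k, 0 < W k) -> (v0 < l)%nat ->
  Nat.Even l ->
  forall p n, 0 < cyl_prob l W X0 v0 p n ->
    kappa l W X0 p n = sumR (fun i => (-1) ^ i * Wstar W (Xn l X0 p n i)) l.
Proof.
  intros Hl hW Hv Hev p n. induction n; intros H.
  - unfold kappa. rewrite sumR_zero. 2:{ intros. unfold kappa_i. simpl. ring. }
    rewrite Rplus_0_l. apply sumR_ext. intros. unfold Xn. simpl. rewrite Nat.add_0_r. auto.
  - pose proof (cyl_prev l W X0 v0 p n hW H) as H0.
    assert (Hu : (p n < l)%nat) by (eapply cyl_lt; eauto).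
    destruct (cyl_valid l W X0 v0 p (S n) hW H) as [_ B].
    assert (Hstep := B n ltac:(lia)).
    assert (E1 : kappa l W X0 p (S n) = kappa l W X0 p n +
               sumR (fun i => (-1) ^ i * kterm l W X0 i p n) l).
    { unfold kappa. rewrite (sumR_ext _ (fun i => (-1) ^ i * kappa_i l W X0 i p n
            + (-1) ^ i * kterm l W X0 i p n)).
      2:{ intros. rewrite kappa_i_S. ring. }
      rewrite sumR_plus. ring. }
    rewrite E1, IHn by auto.
    rewrite (sumR_ext (fun i => (-1) ^ i * Wstar W (Xn l X0 p (S n) i))
      (fun i => (-1) ^ i * Wstar W (Xn l X0 p n i)
        + (-1) ^ i * (if Nat.eqb (edge_of l (p n) (p (S n))) i then / W (Xn l X0 p n i) else 0))).
    2:{ intros. rewrite Xn_S, Wstar_add. ring. }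
    rewrite sumR_plus. f_equal.
    rewrite (sumR_delta _ l (p n)).
    2: auto.
    2:{ intros k _ Hk. unfold kterm. apply Nat.eqb_neq in Hk. rewrite Nat.eqb_sym, Hk. simpl. ring. }
    unfold kterm.
    destruct Hstep as [E|E]; rewrite E.
    + rewrite edge_succ. rewrite (sumR_delta _ l (p n)); auto.
      2:{ intros k _ Hk. apply Nat.eqb_neq in Hk. rewrite Nat.eqb_sym, Hk. ring. }
      rewrite !Nat.eqb_refl. simpl.
      replace (Nat.eqb (succv l (p n)) (predv l (p n))) with false. ring.
      symmetry. apply Nat.eqb_neq. apply succ_neq_pred; auto.
    + rewrite edge_pred by auto. rewrite (sumR_delta _ l (predv l (p n))); auto using predv_lt.
      2:{ intros k _ Hk. apply Nat.eqb_neq in Hk. rewrite Nat.eqb_sym, Hk. ring. }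
      rewrite !Nat.eqb_refl. simpl.
      replace (Nat.eqb (predv l (p n)) (succv l (p n))) with false.
      rewrite sign_pred by auto. ring.
      symmetry. apply Nat.eqb_neq. intro. eapply succ_neq_pred; eauto.
Qed.

Fixpoint code (n : nat) (p : nat -> nat) : nat :=
  match n with O => p 0%nat | S m => Cantor.to_nat (p 0%nat, code m (fun k => p (S k))) end.
Fixpoint decf (n c : nat) : nat -> nat :=
  match n with
  | O => fun _ => c
  | S m => fun k => match k with O => fst (Cantor.of_nat c) | S k' => decf m (snd (Cantor.of_nat c)) k' end
  end.

Lemma decf_code n : forall p k, (k <= n)%nat -> decf n (code n p) k = p k.
Proof.
  induction n; intros p k Hk; cbn [decf code].
  - assert (k = 0%nat) by lia. subst. auto.
  - rewrite Cantor.cancel_of_to. simpl. destruct k; auto.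
    rewrite IHn by lia. auto.
Qed.

Lemma sumR_nonpos f n : (forall k, (k < n)%nat -> f k <= 0) -> sumR f n <= 0.
Proof.
  induction n; intros H; simpl. lra.
  pose proof (H n ltac:(lia)). assert (sumR f n <= 0) by (apply IHn; intros; apply H; lia). lra.
Qed.

Lemma null_of_bad l W X0 v0 (A : (nat -> nat) -> Prop) :
  (forall p, A p -> exists n, ~ 0 < cyl_prob l W X0 v0 p n) -> null_set l W X0 v0 A.
Proof.
  intros HA eps Heps.
  set (c := fun j : nat =>
     let q := decf (fst (Cantor.of_nat j)) (snd (Cantor.of_nat j)) in
     if Rlt_dec 0 (cyl_prob l W X0 v0 q (fst (Cantor.of_nat j)))
     then ((fun _ : nat => S v0), 0%nat) else (q, fst (Cantor.of_nat j))).
  exists c. split.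
  - intros p Hp. destruct (HA p Hp) as [n Hn].
    exists (Cantor.to_nat (n, code n p)). unfold c. rewrite Cantor.cancel_of_to. simpl.
    rewrite (cyl_agree l W X0 v0 _ p n) by (intros; apply decf_code; auto).
    destruct (Rlt_dec 0 (cyl_prob l W X0 v0 p n)) as [X|X]; [tauto|]. simpl.
    intros k Hk. symmetry. apply decf_code; auto.
  - intros N. apply Rle_trans with 0; [|lra]. apply sumR_nonpos. intros j _.
    unfold c. destruct (Rlt_dec _ _) as [X|X]; simpl.
    + unfold cyl_prob. cbn [prodR]. replace (Nat.eqb (S v0) v0) with false. simpl; lra.
      symmetry. apply Nat.eqb_neq. lia.
    + lra.
Qed.

Lemma cv_ext u v L : (forall n, u n = v n) -> Un_cv v L -> Un_cv u L.
Proof. intros E H eps He. destruct (H eps He) as [N HN]. exists N. intros. rewrite E. auto. Qed.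

Lemma cv_const c : Un_cv (fun _ => c) c.
Proof. intros eps He. exists 0%nat. intros. unfold Rdist. rewrite Rminus_diag, Rabs_R0. lra. Qed.

Lemma cv_sumR (f : nat -> nat -> R) L m :
  (forall i, (i < m)%nat -> Un_cv (fun n => f n i) (L i)) ->
  Un_cv (fun n => sumR (f n) m) (sumR L m).
Proof.
  induction m; intros H; simpl.
  - apply cv_const.
  - apply CV_plus. apply IHm; intros; apply H; lia. apply H; lia.
Qed.

Lemma cv_scal c u L : Un_cv u L -> Un_cv (fun n => c * u n) (c * L).
Proof. intros. apply CV_mult; auto. apply cv_const. Qed.

Lemma sumR_sum_f f m : sumR f (S m) = sum_f_R0 f m.
Proof. induction m. simpl. ring. change (sumR f (S (S m))) with (sumR f (S m) + f (S m)). rewrite IHm. reflexivity. Qed.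

Lemma Wstar_mono W m m' : (forall k, 0 < W k) -> (m <= m')%nat -> Wstar W m <= Wstar W m'.
Proof.
  intros hW. induction 1. lra. unfold Wstar in *. simpl.
  pose proof (Rinv_0_lt_compat _ (hW m0)). lra.
Qed.

Lemma Wstar_le W s m : (forall k, 0 < W k) -> infinite_sum (fun k => / W k) s -> Wstar W m <= s.
Proof.
  intros hW Hs.
  assert (G : Un_growing (sum_f_R0 (fun k => / W k))).
  { intros n. simpl. pose proof (Rinv_0_lt_compat _ (hW (S n))). lra. }
  pose proof (growing_ineq _ s G Hs) as Hle.
  destruct m.
  - unfold Wstar. simpl. pose proof (Hle 0%nat). simpl in H. pose proof (Rinv_0_lt_compat _ (hW 0%nat)). lra.
  - unfold Wstar. rewrite sumR_sum_f. apply Hle.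
Qed.

Lemma Xn_to_inf l X0 p i : all_edges_io l p -> (i < l)%nat ->
  forall M, exists N, forall n, (N <= n)%nat -> (M <= Xn l X0 p n i)%nat.
Proof.
  intros Hio Hi M. induction M.
  - exists 0%nat. intros. lia.
  - destruct IHM as [N HN]. destruct (Hio i Hi N) as [k [Hk Ek]].
    exists (S k). intros n Hn.
    pose proof (Xn_mono l X0 p (S k) n i Hn). rewrite Xn_S in H.
    rewrite Ek, Nat.eqb_refl in H. pose proof (HN k Hk). lia.
Qed.

Lemma Wstar_cv_s l W X0 p i s : all_edges_io l p -> (i < l)%nat ->
  infinite_sum (fun k => / W k) s -> Un_cv (fun n => Wstar W (Xn l X0 p n i)) s.
Proof.
  intros Hio Hi Hs eps He. destruct (Hs eps He) as [N0 HN0].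
  destruct (Xn_to_inf l X0 p i Hio Hi (S N0)) as [N HN]. exists N. intros n Hn.
  pose proof (HN n Hn). destruct (Xn l X0 p n i) as [|m] eqn:E. lia.
  unfold Wstar. rewrite sumR_sum_f. apply HN0. lia.
Qed.

Lemma sum_alt_zero c l : Nat.Even l -> sumR (fun i => (-1) ^ i * c) l = 0.
Proof.
  intros [m Hm]. subst l. induction m. simpl. ring.
  replace (2 * S m)%nat with (S (S (2 * m))) by lia.
  change (sumR (fun i => (-1) ^ i * c) (S (S (2 * m)))) with
    (sumR (fun i => (-1) ^ i * c) (2 * m) + (-1) ^ (2 * m) * c + (-1) ^ (S (2*m)) * c).
  rewrite IHm. simpl. ring.
Qed.

Lemma all_pos_of l W X0 v0 p : ~ (exists n, ~ 0 < cyl_prob l W X0 v0 p n) ->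
  forall n, 0 < cyl_prob l W X0 v0 p n.
Proof. intros H n. apply NNPP. intro X. apply H. eauto. Qed.

Theorem mainTheorem5 (l : nat) (W : nat -> R) (X0 : nat -> nat) (v0 : nat)
  (hl : (3 <= l)%nat) (hW : forall k, 0 < W k) (hv0 : (v0 < l)%nat) :
  (forall i, (i < l)%nat -> martingale l W X0 v0 (kappa_i l W X0 i)) /\
  (Nat.Even l ->
     (forall p n, 0 < cyl_prob l W X0 v0 p n ->
        kappa l W X0 p n = sumR (fun i => (-1) ^ i * Wstar W (Xn l X0 p n i)) l) /\
     martingale l W X0 v0 (kappa l W X0) /\
     ((exists s, infinite_sum (fun k => / W k) s) ->
        almost_surely l W X0 v0 (fun p => exists L, Un_cv (fun n => kappa l W X0 p n) L) /\
        almost_surely l W X0 v0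
          (fun p => all_edges_io l p -> Un_cv (fun n => kappa l W X0 p n) 0))).
Proof.
  split. { intros i _. apply mart_ki; auto. }
  intros Hev. split. { apply kappa_formula; auto. }
  split. { apply kappa_mart; auto. }
  intros [s Hs]. split.
  - apply null_of_bad. intros p Hp. apply NNPP. intro Hb. apply Hp.
    pose proof (all_pos_of l W X0 v0 p Hb) as Hall.
    set (g := fun i n => Wstar W (Xn l X0 p n i)).
    assert (grow : forall i, Un_growing (g i)).
    { intros i n. unfold g. apply Wstar_mono; auto. apply Xn_mono. lia. }
    assert (ub : forall i, has_ub (g i)).
    { intros i. exists s. intros x [k ->]. unfold g. apply Wstar_le; auto. }
    exists (sumR (fun i => (-1) ^ i * proj1_sig (growing_cv (g i) (grow i) (ub i))) l).
    apply cv_ext with (v := fun n => sumR (fun i => (-1) ^ i * g i n) l).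
    { intros n. apply (kappa_formula l W X0 v0); auto. }
    apply (cv_sumR (fun n i => (-1) ^ i * g i n)). intros i _.
    apply cv_scal. apply (proj2_sig (growing_cv (g i) (grow i) (ub i))).
  - apply null_of_bad. intros p Hp. apply NNPP. intro Hb. apply Hp. intro Hio.
    pose proof (all_pos_of l W X0 v0 p Hb) as Hall.
    rewrite <- (sum_alt_zero s l Hev).
    apply cv_ext with (v := fun n => sumR (fun i => (-1) ^ i * Wstar W (Xn l X0 p n i)) l).
    { intros n. apply (kappa_formula l W X0 v0); auto. }
    apply (cv_sumR (fun n i => (-1) ^ i * Wstar W (Xn l X0 p n i))). intros i Hi.
    apply cv_scal. apply Wstar_cv_s; auto.
Qed.
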